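(* Let $\theta>0$, $\lambda>0$, $\mu>0$, $e\ge 0$. Let $$\pi(\alpha,d)=(\theta+\mu)\alpha-\frac{\alpha^2}{2}-\frac{\alpha}{\alpha+d}\lambda\alpha\theta-d,$$ and let $d^*(\alpha)$ be the firm's privately optimal security investment, $d^*(\alpha)=0$ if $\lambda\theta\le1$ and $d^*(\alpha)=\alpha(\sqrt{\lambda\theta}-1)$ if $\lambda\theta>1$. Define $$W_{SB}(\alpha)=\pi(\alpha,d^*(\alpha))-e\,\frac{\alpha}{\alpha+d^*(\alpha)}\,\lambda\alpha\theta .$$ Then the maximizer of $W_{SB}$ over $\alpha\ge 0$ (second-best deployment) is $$\alpha^{**}_{SB}(\theta)=\max\!\left\{0,\;\begin{cases}\mu+\theta\big(1-(1+e)\lambda\big), & \lambda\theta\le 1,\\ \theta+\mu+1-(2+e)\sqrt{\lambda\theta}, & \lambda\theta>1.\end{cases}\right\}$$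
   Context: A regulator chooses deployment $\alpha$ while the firm privately chooses security investment $d$ to maximize $\pi(\alpha,\cdot)$. $\theta$ is capability, $\lambda$ breach-loss magnitude, $\mu$ organizational readiness, $e$ the breach externality parameter (social breach damage is $(1+e)$ times private expected loss $\frac{\alpha}{\alpha+d}\lambda\alpha\theta$). *)

(* Defs.v *)
From Stdlib Require Import Reals.
Open Scope R_scope.

Definition profit (theta lambda mu alpha d : R) : R :=
  (theta + mu) * alpha - alpha ^ 2 / 2
  - (alpha / (alpha + d)) * lambda * alpha * theta - d.

Definition dstar (theta lambda alpha : R) : R :=
  if Rle_dec (lambda * theta) 1 then 0
  else alpha * (sqrt (lambda * theta) - 1).

Definition W_SB (theta lambda mu e alpha : R) : R :=
  let d := dstar theta lambda alpha in
  profit theta lambda mu alpha d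
  - e * (alpha / (alpha + d)) * lambda * alpha * theta.

Definition alpha_SB (theta lambda mu e : R) : R :=
  Rmax 0 (if Rle_dec (lambda * theta) 1
          then mu + theta * (1 - (1 + e) * lambda)
          else theta + mu + 1 - (2 + e) * sqrt (lambda * theta)).

(* Main.v *)
Require Import Defs.
From Stdlib Require Import Reals Lra Psatz.
Open Scope R_scope.

Definition Kc (theta lambda mu e : R) : R :=
  if Rle_dec (lambda * theta) 1
  then mu + theta * (1 - (1 + e) * lambda)
  else theta + mu + 1 - (2 + e) * sqrt (lambda * theta).

Lemma W_form theta lambda mu e alpha :
  0 < theta -> 0 < lambda -> 0 <= alpha ->
  W_SB theta lambda mu e alpha = Kc theta lambda mu e * alpha - alpha ^ 2 / 2.
Proof.
  intros Ht Hl Ha. unfold W_SB, profit, dstar, Kc.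
  destruct (Rle_dec (lambda * theta) 1) as [H|H].
  - destruct (Req_dec alpha 0) as [->|Hn].
    + rewrite Rplus_0_r. unfold Rdiv. rewrite Rmult_0_l. ring.
    + rewrite Rplus_0_r. field. auto.
  - assert (Hs: 1 < sqrt (lambda * theta)).
    { rewrite <- sqrt_1. apply sqrt_lt_1; lra. }
    assert (Hss: sqrt (lambda*theta) * sqrt (lambda*theta) = lambda*theta)
      by (apply sqrt_sqrt; lra).
    destruct (Req_dec alpha 0) as [->|Hn].
    + rewrite Rmult_0_l, Rplus_0_r. unfold Rdiv. rewrite Rmult_0_l. ring.
    + replace (alpha + alpha * (sqrt (lambda * theta) - 1)) with (alpha * sqrt (lambda*theta)) by ring.
      replace (alpha / (alpha * sqrt (lambda * theta))) with (/ sqrt (lambda*theta)) by (field; lra).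
      assert (Hq: / sqrt (lambda*theta) * lambda * alpha * theta = sqrt (lambda*theta) * alpha).
      { replace (/ sqrt (lambda*theta) * lambda * alpha * theta) with (/ sqrt (lambda*theta) * (lambda * theta) * alpha) by ring.
        set (s := sqrt (lambda*theta)) in *. rewrite <- Hss. field. lra. }
      replace (e * / sqrt (lambda * theta) * lambda * alpha * theta) with (e * (/ sqrt (lambda*theta) * lambda * alpha * theta)) by ring.
      rewrite Hq. ring.
Qed.

Theorem proposition7 (theta lambda mu e : R)
  (Htheta : 0 < theta) (Hlambda : 0 < lambda) (Hmu : 0 < mu) (He : 0 <= e) :
  0 <= alpha_SB theta lambda mu e /\
  (forall alpha, 0 <= alpha ->
     W_SB theta lambda mu e alpha <= W_SB theta lambda mu e (alpha_SB theta lambda mu e)) /\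
  (forall alpha, 0 <= alpha ->
     W_SB theta lambda mu e alpha = W_SB theta lambda mu e (alpha_SB theta lambda mu e) ->
     alpha = alpha_SB theta lambda mu e).
Proof.
  assert (HA: alpha_SB theta lambda mu e = Rmax 0 (Kc theta lambda mu e)) by reflexivity.
  set (K := Kc theta lambda mu e) in *.
  assert (H0: 0 <= alpha_SB theta lambda mu e) by (rewrite HA; apply Rmax_l).
  split; [exact H0|].
  rewrite (W_form _ _ mu e _ Htheta Hlambda H0).
  rewrite HA. fold K.
  split; intros a Ha; rewrite (W_form _ _ mu e _ Htheta Hlambda Ha); fold K.
  - destruct (Rle_dec K 0) as [Hk|Hk].
    + rewrite Rmax_left by lra. simpl. assert (K*a <= 0) by nra. nra.
    + rewrite Rmax_right by lra. simpl. assert (0 <= (a-K)*(a-K)) by apply Rle_0_sqr. nra.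
  - intros Heq. destruct (Rle_dec K 0) as [Hk|Hk].
    + rewrite Rmax_left in * by lra. simpl in *. assert (K*a <= 0) by nra. nra.
    + rewrite Rmax_right in * by lra. simpl in *. assert ((a-K)*(a-K) = 0) by nra. nra.
Qed.
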